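(* Let $T$ be a tree on $n\ge 1$ vertices. Then $\mathrm{dearth}(T)\ge \frac{1}{3}n-1$.
   Context: For a tree $T$, let $V_3(T)$ be the set of vertices of degree at least $3$, and $d(v)$ the degree of $v$ in $T$. Two vertices $u,v$ form an odd pair if they are non-adjacent in $T$ and the length of the unique $u$–$v$ path in $T$ is odd; $\mathrm{op}(T)$ is the number of (unordered) odd pairs. The dearth of $T$ is $\mathrm{dearth}(T)=\sum_{v\in V_3(T)}\frac{1}{6}d(v)(d(v)-1)+\mathrm{op}(T)$. *)

(* Defs.v *)
From mathcomp Require Import all_boot all_order all_algebra.
Set Implicit Arguments. Unset Strict Implicit. Unset Printing Implicit Defensive.
Import Order.TTheory GRing.Theory Num.Theory.

Definition simple_graph (T : finType) (e : rel T) : Prop :=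
  symmetric e /\ irreflexive e.

Definition num_edges (T : finType) (e : rel T) : nat :=
  #|[set p : T * T | e p.1 p.2]| %/ 2.

Definition is_tree (T : finType) (e : rel T) : Prop :=
  simple_graph e /\ (forall u v : T, connect e u v) /\ num_edges e = #|T|.-1.

Definition deg (T : finType) (e : rel T) (v : T) : nat := #|[set y | e v y]|.

(* u, v form an odd pair: non-adjacent and the (unique) u–v path, given as a
   vertex-repetition-free e-path u :: p ending at v, has odd length size p. *)
Definition odd_pair (T : finType) (e : rel T) (u v : T) : bool :=
  ~~ e u v &&
  [exists n : 'I_#|T|,
     odd n && [exists p : n.-tuple T,
        [&& path e u p, last u p == v & uniq (u :: p)]]].

(* Number of unordered odd pairs (odd pairs are distinct vertices, counted as
   ordered pairs then halved). *)
Definition op_count (T : finType) (e : rel T) : nat :=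
  #|[set p : T * T | odd_pair e p.1 p.2]| %/ 2.

Definition dearth (T : finType) (e : rel T) : rat :=
  (\sum_(v : T | 3 <= deg e v) ((deg e v)%:R * ((deg e v)%:R - 1) / 6))
  + (op_count e)%:R.

(* Main.v *)
Require Import Defs.
From mathcomp Require Import all_boot all_order all_algebra.
From mathcomp Require Import zify ring lra.
Import Order.TTheory GRing.Theory Num.Theory.
Set Implicit Arguments. Unset Strict Implicit. Unset Printing Implicit Defensive.

Lemma tree_struct (T : finType) (e : rel T) :
  symmetric e -> irreflexive e -> (forall u v, connect e u v) ->
  #|[set q : T * T | e q.1 q.2]| %/ 2 = #|T|.-1 ->
  forall r : T, exists d : T -> nat, exists p : T -> T,
    [/\ d r = 0,
        (forall x, x != r -> e x (p x) /\ (d (p x)).+1 = d x) &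
        (forall x y, e x y -> (y = p x /\ x != r) \/ (x = p y /\ y != r))].
Proof.
move=> sym irr conn hE r.
pose P x := fun n : nat => [exists q : n.-tuple T, path e x q && (last x q == r)].
have dex : forall x, exists n, P x n.
  move=> x; case/connectP: (conn x r) => q pq lq.
  exists (size q); apply/existsP; exists (in_tuple q); by rewrite /= pq -lq eqxx.
pose d x := ex_minn (dex x).
have dP : forall x, P x (d x) /\ forall m, P x m -> d x <= m.
  move=> x; rewrite /d; case: ex_minnP => m Pm mm; by split.
have d0 : d r = 0.
  apply/eqP; rewrite -leqn0; apply: (dP r).2; apply/existsP; exists [tuple]; by rewrite /= eqxx.
have dle : forall x y, e x y -> d x <= (d y).+1.
  move=> x y exy; apply: (dP x).2; case/existsP: (dP y).1 => q /andP[pq lq].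
  apply/existsP; exists (cons_tuple y q); by rewrite /= exy pq.
have dex2 : forall x, x != r -> exists y, e x y && ((d y).+1 == d x).
  move=> x xr; case: (dP x) => Px _; move: Px.
  case E: (d x) => [|n] /existsP [q /andP [pq lq]].
    move: pq lq; rewrite (tuple0 q) /= => _ /eqP xr'; by rewrite xr' eqxx in xr.
  move: pq lq; case/tupleP: q => y q /= /andP [exy pq] lq.
  exists y; rewrite exy /=.
  have h1 : d y <= n by apply: (dP y).2; apply/existsP; exists q; rewrite pq lq.
  have h2 := dle _ _ exy; rewrite E in h2; apply/eqP; lia.
pose p x := odflt x [pick y | e x y && ((d y).+1 == d x)].
have pP : forall x, x != r -> e x (p x) /\ (d (p x)).+1 = d x.
  move=> x xr; rewrite /p; case: pickP => [y /andP [h1 /eqP h2] | H] //=.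
  by case: (dex2 x xr) => y; rewrite H.
exists d, p; split => //.
pose S := [set q : T * T | e q.1 q.2].
pose I1 := [set (x, p x) | x in [set~ r]].
pose I2 := [set (p x, x) | x in [set~ r]].
have cI1 : #|I1| = #|T|.-1 by rewrite card_imset ?cardsC1 // => x y [].
have cI2 : #|I2| = #|T|.-1 by rewrite card_imset ?cardsC1 // => x y [].
have dI : I1 :&: I2 = set0.
  apply/setP => [[x y]]; rewrite !inE; apply/negbTE/negP => /andP [].
  case/imsetP => x1; rewrite !inE => x1r [-> ->].
  case/imsetP => x2; rewrite !inE => x2r [h1 h2].
  have := (pP _ x1r).2; have := (pP _ x2r).2; rewrite -h1 -h2; lia.
have cI : #|I1 :|: I2| = (#|T|.-1).*2 by rewrite cardsU dI cards0 cI1 cI2; lia.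
have IS : I1 :|: I2 \subset S.
  apply/subsetP => [[x y]]; rewrite !inE; case/orP => /imsetP [z]; rewrite !inE => zr [-> ->] /=.
    exact: (pP z zr).1.
  by rewrite sym; exact: (pP z zr).1.
move=> x y exy.
have : (x, y) \in I1 :|: I2.
  apply/negPn/negP => nI.
  have nI' : (y, x) \notin I1 :|: I2.
    apply/negP; rewrite !inE; case/orP => /imsetP [z]; rewrite !inE => zr [h1 h2]; apply: (negP nI).
      by rewrite !inE; apply/orP; right; apply/imsetP; exists z; rewrite ?inE // h1 h2.
    by rewrite !inE; apply/orP; left; apply/imsetP; exists z; rewrite ?inE // h1 h2.
  have sub : (x, y) |: ((y, x) |: (I1 :|: I2)) \subset S.
    apply/subsetP => q; rewrite !inE; case/or3P => [/eqP -> | /eqP -> | qI] /=.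
    - by rewrite exy.
    - by rewrite sym.
    - by move/subsetP: IS => /(_ q); rewrite !inE; apply.
  have := subset_leq_card sub; rewrite cardsU1 cardsU1 cI.
  have -> : (x, y) \notin (y, x) |: (I1 :|: I2).
    rewrite !in_setU1 negb_or (negbTE nI) andbT; apply/negP => /eqP [h _]; by rewrite h irr in exy.
  rewrite nI' /=.
  have n1 : 0 < #|T| by apply/card_gt0P; exists x.
  move: hE; rewrite -/S => hE; move=> h; have := leq_div2r 2 h; rewrite hE. move=> H; rewrite -mul2n in H; have E2 : 1 + (1 + 2 * #|T|.-1) = (#|T|.-1).+1 * 2 by rewrite mulnC; lia. by rewrite E2 mulnK // ltnn in H.
rewrite !inE; case/orP => /imsetP [z]; rewrite !inE => zr [-> ->]; by [left | right].
Qed.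

Lemma op4 (T : finType) (e : rel T) (w0 w1 w2 w3 : T) :
  e w0 w1 -> e w1 w2 -> e w2 w3 -> uniq [:: w0; w1; w2; w3] -> ~~ e w0 w3 ->
  odd_pair e w0 w3.
Proof.
move=> e01 e12 e23 u ne; rewrite /odd_pair ne /=.
have h3 : 3 < #|T|.
  have := max_card (mem [:: w0; w1; w2; w3]); by rewrite (card_uniqP u).
apply/existsP; exists (Ordinal h3); rewrite /=.
apply/existsP; exists [tuple w1; w2; w3]; rewrite /= e01 e12 e23 eqxx /=; by move: u; rewrite /= => ->.
Qed.

Local Open Scope ring_scope.

Lemma term_ge0 (D : nat) : (3 <= D)%N -> 0 <= (D%:R * (D%:R - 1) / 6 : rat).
Proof.
move=> h; apply: divr_ge0 => //; apply: mulr_ge0 => //; rewrite subr_ge0 ler1n; lia.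
Qed.

Lemma dearth_ge0 (T : finType) (e : rel T) : 0 <= dearth e.
Proof.
rewrite /dearth; apply: addr_ge0 => //; apply: sumr_ge0 => i hi; exact: term_ge0.
Qed.


Theorem lemma29 (T : finType) (e : rel T) :
  (1 <= #|T|)%N -> is_tree e ->
  (#|T|%:R / 3 - 1 : rat) <= dearth e.
Proof.
move=> n1 [[sym irr] [conn hE]].
have D0 := dearth_ge0 e.
case: (leqP #|T| 1) => [nle1 | ngt1].
  have : (#|T|%:R : rat) <= 1%:R by rewrite ler_nat.
  lra.
case/card_gt1P: ngt1 => x0 [y0 [_ _ xy0]].
have [d0 [p0 [d0r F20 F30]]] := tree_struct sym irr conn hE x0.
case: (@arg_maxnP _ x0 predT d0 isT) => l _ hmax.
have G10 : forall x, d0 x = 0%N -> x = x0.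
  move=> x dx; apply/eqP; apply/negPn/negP => xr; have := (F20 x xr).2; lia.
have lr : l != x0.
  apply/negP => /eqP lr; move: xy0; rewrite (G10 y0) ?eqxx //.
    by have := hmax y0 isT; rewrite lr d0r; lia.
pose a := p0 l.
have ela : e l a by exact: (F20 l lr).1.
have leaf : forall y, e l y -> y = a.
  move=> y ely; case: (F30 _ _ ely) => [[-> _] // | [hl yr]].
  have := (F20 y yr).2; have := hmax y isT; rewrite -hl; lia.
have [d [p [dr F2 F3]]] := tree_struct sym irr conn hE l.
have G1 : forall x, d x = 0%N -> x = l.
  move=> x dx; apply/eqP; apply/negPn/negP => xr; have := (F2 x xr).2; lia.
have G2 : forall x y, e x y -> d x = (d y).+1 \/ d y = (d x).+1.
  move=> x y exy; case: (F3 _ _ exy) => [[-> xl] | [-> yl]].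
    by left; rewrite (F2 x xl).2.
  by right; rewrite (F2 y yl).2.
pose A := [set x | (d x <= 2)%N].
have sA : A \subset a |: [set y | e a y].
  apply/subsetP => x; rewrite !inE => dx.
  case: (eqVneq x l) => [-> | xl]; first by rewrite sym ela orbT.
  have [exp dp] := F2 x xl.
  case: (eqVneq (p x) l) => [pl | pl].
    by rewrite (leaf x) ?eqxx // sym -pl.
  have [epp dpp] := F2 _ pl.
  have ppl : p (p x) = l by apply: G1; lia.
  have pa : p x = a by apply: leaf; rewrite sym -ppl.
  by rewrite sym -pa exp orbT.
have cA : (#|A| <= (deg e a).+1)%N.
  have := subset_leq_card sA; rewrite cardsU1 /deg; case: (a \notin _) => /=; lia.
pose K := ~: A.
have ch : forall x, x \in K -> [/\ e x (p x), e (p x) (p (p x)), e (p (p x)) (p (p (p x))),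
    (d (p (p (p x))) + 3 = d x)%N & uniq [:: x; p x; p (p x); p (p (p x))]
    /\ uniq [:: p (p (p x)); p (p x); p x; x]].
  move=> x; rewrite !inE -ltnNge => dx.
  have xl : x != l by apply/negP => /eqP xl; rewrite xl dr in dx.
  have [e1 d1] := F2 x xl.
  have y1l : p x != l by apply/negP => /eqP xl'; rewrite xl' dr in d1; lia.
  have [e2 d2] := F2 _ y1l.
  have y2l : p (p x) != l by apply/negP => /eqP xl'; rewrite xl' dr in d2; lia.
  have [e3 d3] := F2 _ y2l.
  split => //; first lia.
  split; apply: (@map_uniq _ _ d); rewrite /= !inE; lia.
pose O := [set q : T * T | odd_pair e q.1 q.2].
pose J1 := [set (x, p (p (p x))) | x in K].
pose J2 := [set (p (p (p x)), x) | x in K].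
have cJ1 : #|J1| = #|K| by rewrite card_imset // => x y [].
have cJ2 : #|J2| = #|K| by rewrite card_imset // => x y [].
have dJ : J1 :&: J2 = set0.
  apply/setP => [[x y]]; rewrite !inE; apply/negbTE/negP => /andP [].
  case/imsetP => x1 x1K [-> ->].
  case/imsetP => x2 x2K [h1 h2].
  have [_ _ _ h _] := ch _ x1K; have [_ _ _ h' _] := ch _ x2K.
  move: h h'; rewrite -h1 -h2; lia.
have JO : J1 :|: J2 \subset O.
  apply/subsetP => [[x y]]; rewrite !inE; case/orP => /imsetP [z zK [-> ->]] /=;
    have [e1 e2 e3 dz [u1 u2]] := ch _ zK.
  - apply: (op4 e1 e2 e3 u1); apply/negP => ez; case: (G2 _ _ ez) => h; clear -dz h; lia.
  - apply: (op4 _ _ _ u2); [by rewrite sym | by rewrite sym | by rewrite sym | ].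
    apply/negP => ez; case: (G2 _ _ ez) => h; clear -dz h; lia.
have cO : (#|K| <= op_count e)%N.
  have := subset_leq_card JO; rewrite cardsU dJ cards0 cJ1 cJ2 subn0 => h.
  have := leq_div2r 2 h; rewrite addnn -mul2n mulKn //.
have cT : (#|T| <= 1 + deg e a + #|K|)%N.
  have := cardsC A; rewrite -/K => <-; clear -cA; lia.
set D := deg e a in cT cA *; set k := op_count e in cO *.
have hs : (if (3 <= D)%N then D%:R * (D%:R - 1) / 6 else 0)
          <= \sum_(v : T | (3 <= deg e v)%N) ((deg e v)%:R * ((deg e v)%:R - 1) / 6 : rat).
  case: ifP => h3.
    rewrite (bigD1 a) //= lerDl; apply: sumr_ge0 => i /andP [hi _]; exact: term_ge0.
  apply: sumr_ge0 => i hi; exact: term_ge0.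
rewrite /dearth -/k.
have hn : (#|T| <= 1 + D + k)%N by clear -cT cO; lia.
case: ifP hs => h3 hs.
  have hn2 : (2 * #|T| <= 6 + 6 * k + D * (D - 1))%N by clear -hn h3; nia.
  have : ((2 * #|T|)%:R : rat) <= (6 + 6 * k + D * (D - 1))%:R by rewrite ler_nat.
  rewrite !natrD !natrM natrB; last by clear -h3; lia.
  move: hs; set X := D%:R * (D%:R - 1%:R).
  have : (1 + D%:R + k%:R : rat) = (1 + D + k)%N%:R by rewrite !natrD.
  have : (#|T|%:R : rat) <= (1 + D + k)%:R by rewrite ler_nat.
  have : (3 : rat) <= D%:R by rewrite (ler_nat _ 3).
  have := ler0n rat k; move: X => X; clear; lra.
have h2 : (D <= 2)%N by clear -h3; lia.
have : (#|T|%:R : rat) <= (3 + k)%:R by rewrite ler_nat; clear -hn h2; lia.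
have := ler0n rat k; rewrite natrD; move: hs; clear; lra.
Qed.
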